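(* Let $\varphi=\forall x_1\exists y_1\cdots\forall x_k\exists y_k\,P$ be a positive Horn sentence over a finite relational signature $\sigma$ with $P$ a conjunction of equality-free atomic $\sigma$-formulas, and let $\psi=\forall w_1\exists z_1\cdots\forall w_l\exists z_l\,Q(w_1,z_1,\dots,w_l,z_l)$ be a positive Horn sentence over $\sigma$ with $Q$ a conjunction of atoms. The following are equivalent: (i) Existential has a winning strategy in the $\psi$-rel-game on $\mathcal{T}_\varphi(C_\omega)$; (ii) Existential has a winning strategy in the $\psi$-rel-cc-game on $\mathcal{T}_\varphi(C_\omega)$; (iii) Existential has a winning strategy in the $\psi$-rel-cc-game on $\mathcal{T}_\varphi(C_l)$; (iv) Existential has a winning strategy in the $\psi$-rel-cc-game on $\mathcal{T}^{l^{l+2}}_\varphi(C_l)$.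
   Context: Let $f_1,\dots,f_k$ be new function symbols, $f_i$ of arity $i$, and $\mathrm{Sk}(\varphi)=\forall x_1\cdots\forall x_k\,P(x_1,f_1(x_1),\dots,x_k,f_k(x_1,\dots,x_k))$. For $\alpha$ a positive integer or $\omega$, $C_\alpha=\{c_1,\dots,c_\alpha\}$ (resp. $\{c_1,c_2,\dots\}$) are new constants, $T_\varphi(C_\alpha)$ is the set of closed terms built from $C_\alpha$ with the $f_i$, and the rank of a term is its maximal nesting depth of function symbols. $\mathcal{T}_\varphi(C_\alpha)$ is the $\sigma$-structure on $T_\varphi(C_\alpha)$ in which $R(t_1,\dots,t_p)$ holds iff it is obtained from an atom of the matrix of $\mathrm{Sk}(\varphi)$ by substituting terms of $T_\varphi(C_\alpha)$ for $x_1,\dots,x_k$; $\mathcal{T}^m_\varphi(C_\alpha)$ is its induced substructure on terms of rank $\leq m$. For a structure $\mathcal{M}$ equal to $\mathcal{T}_\varphi(C_\alpha)$ or $\mathcal{T}^m_\varphi(C_\alpha)$: the $\psi$-rel-game on $\mathcal{M}$ is played in rounds $i=1,\dots,l$, in round $i$ Universal chooses a value for $w_i$ from $C_\alpha$ and then Existential chooses a value for $z_i$ from the domain of $\mathcal{M}$; Existential wins iff $\mathcal{M}\models Q$ under the resulting assignment. The $\psi$-rel-cc-game is the same, except that in round $i$ Existential must choose a term in which only constants already chosen by Universal in rounds $1,\dots,i$ occur. A winning strategy for Existential is one that wins against every play of Universal. *)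

(* Defs.v *)
From Stdlib Require List.
From mathcomp Require Import all_boot.
Set Implicit Arguments. Unset Strict Implicit. Unset Printing Implicit Defensive.

(* Closed terms over constants c_0, c_1, ... (paper's c_1, c_2, ...) and the
   Skolem function symbols f_i (i = 1..k, f_i of arity i).
   [Fn i ts] stands for f_i(ts). *)
Inductive term : Type :=
| Cst of nat
| Fn of nat & seq term.

(* C_alpha: [Some n] = {c_0,...,c_{n-1}} (paper's C_n), [None] = C_omega. *)
Definition inC (alpha : option nat) (c : nat) : bool :=
  if alpha is Some n then c < n else true.

Fixpoint wf_term (alpha : option nat) (k : nat) (t : term) : bool :=
  match t with
  | Cst c => inC alpha c
  | Fn i ts => [&& 0 < i <= k, size ts == i & all (wf_term alpha k) ts]
  end.

Fixpoint rank (t : term) : nat :=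
  match t with
  | Cst _ => 0
  | Fn _ ts => (foldr maxn 0 (map rank ts)).+1
  end.

Fixpoint consts (t : term) : seq nat :=
  match t with
  | Cst c => [:: c]
  | Fn _ ts => flatten (map consts ts)
  end.

(* Variables of phi: x_{i+1} = PX i, y_{i+1} = PY i, for i : 'I_k. *)
Inductive pvar (k : nat) : Type :=
| PX of 'I_k
| PY of 'I_k.

Definition patom (S : finType) (ar : S -> nat) (k : nat) : Type :=
  {R : S & (ar R).-tuple (pvar k)}.

(* Substitution in the matrix of Sk(phi): x_{i+1} |-> s i and
   y_{i+1} |-> f_{i+1}(s 0, ..., s i). *)
Definition skinterp (k : nat) (s : nat -> term) (v : pvar k) : term :=
  match v with
  | PX i => s i
  | PY i => Fn i.+1 (mkseq s i.+1)
  end.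

(* Domain of T_phi(C_alpha) (m = None) or T^m_phi(C_alpha) (m = Some m). *)
Definition Tdom (k : nat) (alpha : option nat) (m : option nat) (t : term) : bool :=
  wf_term alpha k t && (if m is Some r then rank t <= r else true).

(* Relation R of T_phi(C_alpha) (resp. its induced substructure on Tdom):
   ts is obtained from an atom of the matrix of Sk(phi) by substituting terms of
   T_phi(C_alpha) for x_1..x_k. *)
Definition Trel (S : finType) (ar : S -> nat) (k : nat) (P : seq (patom ar k))
    (alpha m : option nat) (R : S) (ts : seq term) : Prop :=
  all (Tdom k alpha m) ts /\
  exists a : patom ar k, List.In a P /\ projT1 a = R /\
    exists s : nat -> term, (forall j, j < k -> wf_term alpha k (s j)) /\
      ts = map (skinterp s) (tval (projT2 a)).

(* Variables of psi: w_{j+1} = QW j, z_{j+1} = QZ j. *)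
Inductive qvar (l : nat) : Type :=
| QW of 'I_l
| QZ of 'I_l.

Inductive qatom (S : finType) (ar : S -> nat) (l : nat) : Type :=
| QRel (R : S) of (ar R).-tuple (qvar l)
| QEq of qvar l & qvar l.

Definition satQ (S : finType) (ar : S -> nat) (k : nat) (P : seq (patom ar k))
    (alpha m : option nat) (l : nat) (Q : seq (qatom ar l)) (e : qvar l -> term) : Prop :=
  forall q, List.In q Q ->
    match q with
    | QRel R args => Trel P alpha m R (map e (tval args))
    | QEq u v => e u = e v
    end.

(* A strategy for Existential maps the sequence of Universal's moves so far
   (w_1..w_j, as constant indices) to Existential's move z_j.
   It is winning in the psi-rel-game (cc = false) or psi-rel-cc-game (cc = true)
   on the structure (alpha, m) if, against every play w of Universal with values
   in C_alpha, all moves are legal (in the domain, and for cc only using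
   constants already played by Universal) and Q holds. *)
Definition winning (S : finType) (ar : S -> nat) (k : nat) (P : seq (patom ar k))
    (alpha m : option nat) (l : nat) (Q : seq (qatom ar l)) (cc : bool)
    (str : seq nat -> term) : Prop :=
  forall w : nat -> nat, (forall j, j < l -> inC alpha (w j)) ->
    let z := fun j : nat => str (mkseq w j.+1) in
    (forall j, j < l ->
       Tdom k alpha m (z j) &&
       (cc ==> all (fun c => c \in mkseq w j.+1) (consts (z j)))) /\
    satQ P alpha m Q (fun v => match v with QW j => Cst (w j) | QZ j => z j end).

Definition ExistentialWins (S : finType) (ar : S -> nat) (k : nat) (P : seq (patom ar k))
    (alpha m : option nat) (l : nat) (Q : seq (qatom ar l)) (cc : bool) : Prop :=
  exists str, winning P alpha m Q cc str.

(* Main.v *)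
From HB Require Import structures.
Require Import Defs.
From mathcomp Require Import all_boot.
Set Implicit Arguments. Unset Strict Implicit. Unset Printing Implicit Defensive.

Fixpoint term_ind' (Pr : term -> Prop) (Hc : forall c, Pr (Cst c))
  (Hf : forall i ts, (forall t, List.In t ts -> Pr t) -> Pr (Fn i ts)) (t : term) : Pr t :=
  match t with
  | Cst c => Hc c
  | Fn i ts => Hf i ts
      ((fix F (us : seq term) : forall u, List.In u us -> Pr u :=
          match us with
          | [::] => fun u H => False_ind _ H
          | a :: us' => fun u H => match H with
                | or_introl E => eq_ind a Pr (term_ind' Hc Hf a) u E
                | or_intror H' => F us' u H'
                end
          end) ts)
  end.

Fixpoint enc (t : term) : GenTree.tree nat :=
  match t with Cst c => GenTree.Leaf c | Fn i ts => GenTree.Node i (map enc ts) end.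
Fixpoint dec (t : GenTree.tree nat) : term :=
  match t with GenTree.Leaf c => Cst c | GenTree.Node i ts => Fn i (map dec ts) end.

Lemma map_id_In (T : Type) (f : T -> T) (s : seq T) :
  (forall x, List.In x s -> f x = x) -> map f s = s.
Proof. elim: s => //= a s IH H; rewrite H ?IH //; [move=> x Hx; apply: H|]; by [right|left]. Qed.

Lemma encK : cancel enc dec.
Proof.
elim/term_ind' => // i ts IH /=; rewrite -map_comp map_id_In //.
Qed.

HB.instance Definition _ := Countable.copy term (can_type encK).

Lemma InP (T : eqType) (x : T) s : List.In x s <-> x \in s.
Proof. elim: s => //= a s IH; rewrite in_cons IH; split.
- by case=> [->|->]; rewrite ?eqxx ?orbT.
- by case/orP=> [/eqP->|]; [left|right]. Qed.

Lemma term_indm (Pr : term -> Prop) : (forall c, Pr (Cst c)) ->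
  (forall i ts, (forall t, t \in ts -> Pr t) -> Pr (Fn i ts)) -> forall t, Pr t.
Proof. move=> Hc Hf; elim/term_ind' => // i ts IH; apply: Hf => t /InP; exact: IH. Qed.

Fixpoint tsub (g : nat -> nat) (t : term) : term :=
  match t with Cst c => Cst (g c) | Fn i ts => Fn i (map (tsub g) ts) end.

Lemma consts_tsub g t : consts (tsub g t) = map g (consts t).
Proof.
elim/term_indm: t => // i ts IH /=.
rewrite map_flatten -!map_comp; congr flatten; apply/eq_in_map => u Hu /=; exact: IH.
Qed.

Lemma tsub_eq g1 g2 t : (forall c, c \in consts t -> g1 c = g2 c) -> tsub g1 t = tsub g2 t.
Proof.
elim/term_indm: t => [c /= H|i ts IH H /=]; first by rewrite H // mem_seq1.
congr Fn; apply/eq_in_map => u Hu; apply: IH => // c Hc; apply: H.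
by apply/flatten_mapP; exists u.
Qed.

Lemma tsub_id g t : (forall c, c \in consts t -> g c = c) -> tsub g t = t.
Proof.
elim/term_indm: t => [c /= H|i ts IH H /=]; first by rewrite H // mem_seq1.
congr Fn; rewrite -[RHS]map_id; apply/eq_in_map => u Hu; apply: IH => // c Hc; apply: H.
by apply/flatten_mapP; exists u.
Qed.

Lemma wf_consts alpha k t : wf_term alpha k t -> forall c, c \in consts t -> inC alpha c.
Proof.
elim/term_indm: t => [c /= H d|i ts IH /= /and3P[_ _ /allP H] d /flatten_mapP[u Hu Hd]].
  by rewrite mem_seq1 => /eqP->.
exact: IH Hu (H u Hu) d Hd.
Qed.

Lemma wf_consts_nil alpha k t : wf_term alpha k t -> consts t != [::].
Proof.
elim/term_indm: t => // i ts IH /= /and3P[/andP[i0 _] /eqP sz /allP H].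
case: ts sz IH H => [/= sz|u us _ IH H] /=; first by rewrite -sz in i0.
by have := IH u (mem_head _ _) (H u (mem_head _ _)); case: (consts u).
Qed.

Lemma wf_tsub alpha beta k g t : wf_term alpha k t ->
  (forall c, c \in consts t -> inC beta (g c)) -> wf_term beta k (tsub g t).
Proof.
elim/term_indm: t => [c /= _ H|i ts IH /= /and3P[-> sz /allP H] Hc]; first by apply: H; rewrite mem_seq1.
rewrite size_map sz /=; apply/allP => v /mapP[u Hu ->]; apply: IH => //; first exact: H.
by move=> c cu; apply: Hc; apply/flatten_mapP; exists u.
Qed.

Lemma wf_restrict alpha beta k t : wf_term alpha k t ->
  (forall c, c \in consts t -> inC beta c) -> wf_term beta k t.
Proof. move=> H1 H2; rewrite -(@tsub_id id t) //; exact: wf_tsub H1 H2. Qed.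

Lemma foldr_maxn_ge (s : seq nat) x : x \in s -> x <= foldr maxn 0 s.
Proof. elim: s => //= a s IH; rewrite in_cons => /orP[/eqP->|/IH H]; first exact: leq_maxl.
exact: leq_trans H (leq_maxr _ _). Qed.

Lemma foldr_maxn_le (s : seq nat) n : (forall x, x \in s -> x <= n) -> foldr maxn 0 s <= n.
Proof. elim: s => //= a s IH H; rewrite geq_max H ?mem_head // IH // => x Hx; apply: H.
by rewrite in_cons Hx orbT. Qed.

Lemma map_In_ext (T U : Type) (f g : T -> U) s :
  (forall x, List.In x s -> f x = g x) -> map f s = map g s.
Proof. elim: s => //= a s IH H; rewrite H ?IH //; [move=> x Hx; apply: H|]; by [right|left]. Qed.

Section Transfer.
Variables (S : finType) (ar : S -> nat) (k : nat) (P : seq (patom ar k)) (l : nat) (Q : seq (qatom ar l)).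

Lemma transfer (alpha' alpha m' m : option nat) (H : term -> term) (e' e : qvar l -> term) :
  satQ P alpha' m' Q e' ->
  (forall t, wf_term alpha' k t -> wf_term alpha k (H t)) ->
  (forall v, e v = H (e' v)) ->
  (forall v i us, e' v = Fn i us -> H (Fn i us) = Fn i (map H us)) ->
  (forall v, Tdom k alpha m (e v)) ->
  satQ P alpha m Q e.
Proof.
move=> HQ Hwf He HF HT q Hq; have := HQ q Hq; case: q {Hq} => [R args|u v]; last first.
  by move=> E; rewrite !He E.
case=> _ [a [Ha [Ra [s [Hs Hts]]]]]; split.
  by elim: (tval args) => //= x xs ->; rewrite HT.
exists a; split=> //; split=> //; exists (fun j => H (s j)); split.
  by move=> j jk; apply: Hwf; apply: Hs.
have -> : map e (tval args) = map H (map e' (tval args)).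
  by rewrite -map_comp; apply: map_In_ext => v _ /=; rewrite He.
rewrite Hts -map_comp; apply: map_In_ext => x Hx /=.
case: x Hx => [j|j] Hx //=.
have : List.In (Fn j.+1 (mkseq s j.+1)) (map e' (tval args)).
  by rewrite Hts; apply: (List.in_map (skinterp s) _ (PY j)).
case/List.in_map_iff=> v [Ev _]; rewrite (HF v _ _ Ev) /mkseq -map_comp //.
Qed.
End Transfer.

Section Easy.
Variables (S : finType) (ar : S -> nat) (k : nat) (P : seq (patom ar k)) (l : nat) (Q : seq (qatom ar l)).
Hypothesis hl : 0 < l.

Lemma ii_i : ExistentialWins P None None Q true -> ExistentialWins P None None Q false.
Proof.
case=> str W; exists str => w Hw; case: (W w Hw) => H1 H2; split=> // j jl.
by case/andP: (H1 j jl) => ->.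
Qed.

Lemma mem_mkseq_lt (w : nat -> nat) n c : c \in mkseq w n -> exists2 i, i < n & c = w i.
Proof. by case/mapP=> i; rewrite mem_iota add0n => /andP[_ H] ->; exists i. Qed.

Lemma ii_iii : ExistentialWins P None None Q true -> ExistentialWins P (Some l) None Q true.
Proof.
case=> str W; exists str => w Hw; case: (W w (fun _ _ => isT)) => H1 H2.
have Hc : forall j, j < l -> forall c, c \in consts (str (mkseq w j.+1)) -> c < l.
  move=> j jl c Hc; case/andP: (H1 j jl) => _ /allP /(_ c Hc) /mem_mkseq_lt[i ij ->].
  apply: (Hw i); exact: leq_trans ij jl.
split.
  move=> j jl; case/andP: (H1 j jl) => Hd Hall; rewrite Hall andbT.
  move: Hd; rewrite /Tdom !andbT => Hd; apply: (wf_restrict Hd); exact: Hc.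
pose G c := if c < l then c else 0.
apply: (transfer (H := tsub G) H2).
- move=> t Ht; apply: wf_tsub Ht _ => c _ /=; rewrite /G; by case: ifP.
- case=> j /=; first by rewrite /G ifT //; exact: (Hw j (ltn_ord j)).
  by rewrite tsub_id // => c /(Hc j (ltn_ord j)); rewrite /G => ->.
- by [].
- case=> j /=; rewrite /Tdom andbT; first exact: (Hw j (ltn_ord j)).
  have := H1 j (ltn_ord j); rewrite /Tdom andbT => /andP[Hd _].
  apply: (wf_restrict Hd); exact: Hc (ltn_ord j).
Qed.

Lemma iv_iii m : ExistentialWins P (Some l) (Some m) Q true -> ExistentialWins P (Some l) None Q true.
Proof.
case=> str W; exists str => w Hw; case: (W w Hw) => H1 H2; split.
  move=> j jl; case/andP: (H1 j jl) => /andP[Hd _] ->; by rewrite /Tdom Hd.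
apply: (transfer (H := id) H2) => //.
  by move=> v i us _; rewrite map_id.
case=> j /=; first by rewrite /Tdom /=; apply/andP; split=> //; exact: (Hw j (ltn_ord j)).
by case/andP: (H1 j (ltn_ord j)) => /andP[Hd _] _; rewrite /Tdom Hd.
Qed.
End Easy.

Section Collapse.
Variable L : seq term.

Fixpoint hcol (t : term) : term :=
  match t with
  | Cst c => Cst c
  | Fn i ts => if Fn i ts \in L then Fn i (map hcol ts) else Cst (head 0 (consts (Fn i ts)))
  end.

Section Sube.
Variable z : term.
Fixpoint sube (t : term) : bool :=
  (z == t) || (match t with Cst _ => false | Fn _ ts => has sube ts end).
End Sube.

Lemma rank_child i ts u : u \in ts -> rank u < rank (Fn i ts).
Proof. move=> H /=; rewrite ltnS; apply: foldr_maxn_ge; exact: map_f. Qed.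

Lemma sube_rank z t : sube z t -> rank z <= rank t.
Proof.
elim/term_indm: t => [c|i ts IH] /=; first by rewrite orbF => /eqP->.
case/orP=> [/eqP->//|/hasP[u Hu Hz]].
exact: leq_trans (IH u Hu Hz) (ltnW (rank_child i Hu)).
Qed.

Lemma count_lt (T : eqType) (p q : pred T) s x : (forall y, p y -> q y) ->
  x \in s -> q x -> ~~ p x -> count p s < count q s.
Proof.
move=> pq; elim: s => //= a s IH; rewrite in_cons => /orP[/eqP<- qx px|xs qx px].
  rewrite qx (negbTE px) add1n ltnS add0n; apply: sub_count => y; exact: pq.
rewrite -addnS; apply: leq_add; last exact: IH.
by case pa: (p a); rewrite ?(pq _ pa).
Qed.

Lemma foldr_maxn_lt (s : seq nat) n : 0 < n -> (forall x, x \in s -> x < n) -> foldr maxn 0 s < n.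
Proof. move=> n0 H; case: n n0 H => // n _ H; rewrite ltnS; apply: foldr_maxn_le => x /H. by []. Qed.

Lemma hcol_rank t : rank (hcol t) <= count (sube^~ t) L.
Proof.
elim/term_indm: t => // i ts IH /=; case: ifP => tL //.
have rFn : forall us, rank (Fn i us) = (foldr maxn 0 (map rank us)).+1 by [].
have pos : 0 < count (sube^~ (Fn i ts)) L.
  by rewrite -has_count; apply/hasP; exists (Fn i ts) => //=; rewrite eqxx.
rewrite rFn -map_comp; apply: foldr_maxn_lt => // x /mapP[u Hu ->].
apply: leq_ltn_trans (IH u Hu) _; apply: (count_lt (x := Fn i ts)) => //.
- by move=> y Hy /=; apply/orP; right; apply/hasP; exists u.
- by rewrite /= eqxx.
- apply/negP => /sube_rank; rewrite leqNgt; move/negP; apply; exact: rank_child.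
Qed.

Lemma hcol_wf alpha k t : wf_term alpha k t -> wf_term alpha k (hcol t).
Proof.
elim/term_indm: t => // i ts IH /= Hw; case: ifP => _.
  rewrite /=; case/and3P: Hw => -> sz /allP H; rewrite size_map sz /=.
  by apply/allP => v /mapP[u Hu ->]; apply: IH => //; apply: H.
have Hw' : wf_term alpha k (Fn i ts) := Hw.
have := wf_consts_nil Hw'; have := wf_consts Hw' => /=.
case: (flatten _) => //= c cs H _; apply: H; exact: mem_head.
Qed.

Lemma hcol_consts alpha k t : wf_term alpha k t -> {subset consts (hcol t) <= consts t}.
Proof.
elim/term_indm: t => [c _ d //|i ts IH /= Hw]; case: ifP => _.
  case/and3P: Hw => _ _ /allP H c; rewrite /= => /flatten_mapP[v /mapP[u Hu ->] Hc].
  apply/flatten_mapP; exists u => //; exact: IH (H u Hu) c Hc.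
have Hw' : wf_term alpha k (Fn i ts) := Hw.
have := wf_consts_nil Hw' => /=.
case: (flatten _) => //= c cs _ d; rewrite mem_seq1 => /eqP->; exact: mem_head.
Qed.
End Collapse.

Section AllSeq.
Variable l : nat.
Fixpoint allseq n : seq (seq nat) :=
  if n is n'.+1 then [seq x :: s | x <- iota 0 l, s <- allseq n'] else [:: [::]].

Lemma size_allseq n : size (allseq n) = l ^ n.
Proof. by elim: n => //= n IH; rewrite size_allpairs size_iota IH expnS. Qed.

Lemma mem_allseq s : all (fun x => x < l) s -> s \in allseq (size s).
Proof.
elim: s => [|x s IH] /=; first by rewrite mem_seq1.
case/andP=> xl H; apply: (allpairs_f (fun x s => x :: s)); last exact: IH.
by rewrite mem_iota.
Qed.

Lemma sumn_le (s : seq nat) (f : nat -> nat) M : (forall x, x \in s -> f x <= M) ->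
  sumn (map f s) <= size s * M.
Proof. elim: s => //= a s IH H; rewrite mulSn leq_add ?H ?mem_head // IH // => x Hx.
by apply: H; rewrite in_cons Hx orbT. Qed.
End AllSeq.

Section Main4.
Variables (S : finType) (ar : S -> nat) (k : nat) (P : seq (patom ar k)) (l : nat) (Q : seq (qatom ar l)).
Hypothesis hl : 0 < l.

Lemma iii_iv : ExistentialWins P (Some l) None Q true ->
  ExistentialWins P (Some l) (Some (l ^ (l + 2))) Q true.
Proof.
case=> str W.
pose L := [seq str p | p <- flatten [seq allseq l n | n <- iota 1 l]].
have HL : forall (w : nat -> nat) j, (forall i, i < l -> w i < l) -> j < l -> str (mkseq w j.+1) \in L.
  move=> w j Hw jl; apply: map_f; apply/flatten_mapP; exists j.+1.
    by rewrite mem_iota add1n ltnS.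
  rewrite -{2}[j.+1](size_mkseq w); apply: mem_allseq; apply/allP => x /mapP[i].
  rewrite mem_iota add0n ltnS => ij ->; apply: Hw; exact: leq_ltn_trans ij jl.
have szL : size L <= l ^ (l + 2).
  rewrite size_map size_flatten /shape -map_comp.
  apply: (@leq_trans (l * l ^ l)).
    rewrite -[X in X * _](size_iota 1 l); apply: sumn_le => n; rewrite mem_iota add1n ltnS /= size_allseq.
    by case/andP=> _ nl; apply: leq_pexp2l.
  by rewrite -expnS addn2 leq_pexp2l.
exists (fun p => hcol L (str p)) => w Hw; case: (W w Hw) => H1 H2.
have Hwf : forall j, j < l -> wf_term (Some l) k (str (mkseq w j.+1)).
  by move=> j jl; case/andP: (H1 j jl) => /andP[Hd _] _.
split.
  move=> j jl; case/andP: (H1 j jl) => /andP[Hd _] /= /allP Hc.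
  apply/andP; split; [apply/andP; split|].
  - exact: hcol_wf.
  - apply: leq_trans (hcol_rank _ _) _; exact: leq_trans (count_size _ _) szL.
  - apply/allP => c /(hcol_consts Hd); exact: Hc.
apply: (transfer (H := hcol L) H2).
- by move=> t; apply: hcol_wf.
- by case.
- case=> j i us //= E; rewrite ifT // -E; apply: HL => //; exact: Hw.
- case=> j /=; first by rewrite /Tdom /=; apply/andP; split=> //; exact: (Hw j (ltn_ord j)).
  apply/andP; split; first exact: hcol_wf (Hwf j (ltn_ord j)).
  apply: leq_trans (hcol_rank _ _) _; exact: leq_trans (count_size _ _) szL.
Qed.
End Main4.

Lemma take_mkseq (w : nat -> nat) n m : n <= m -> take n (mkseq w m) = mkseq w n.
Proof. by move=> nm; rewrite /mkseq -map_take take_iota (minn_idPl nm). Qed.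

Lemma mem_mkseq_f (w : nat -> nat) i n : i < n -> w i \in mkseq w n.
Proof. by move=> H; apply: map_f; rewrite mem_iota. Qed.

Lemma mem_mkseq_lt' (w : nat -> nat) n c : c \in mkseq w n -> exists2 i, i < n & c = w i.
Proof. by case/mapP=> i; rewrite mem_iota add0n => /andP[_ H] ->; exists i. Qed.

Lemma index_take_mem (s : seq nat) n x : x \in take n s -> index x (take n s) = index x s.
Proof. by move=> H; rewrite -{2}(cat_take_drop n s) index_cat H. Qed.

Lemma index_mkseq_prefix (w : nat -> nat) n x m : m <= n -> x \in mkseq w m ->
  index x (mkseq w n) = index x (mkseq w m).
Proof. by move=> mn H; rewrite -(take_mkseq w mn) index_take_mem // take_mkseq. Qed.

Lemma mkseq_ext_in (w1 w2 : nat -> nat) n : (forall i, i < n -> w1 i = w2 i) -> mkseq w1 n = mkseq w2 n.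
Proof. by move=> H; apply/eq_in_map => i; rewrite mem_iota add0n => /andP[_ /H]. Qed.

Section Rename.
Variables (S : finType) (ar : S -> nat) (k : nat) (P : seq (patom ar k)) (l : nat) (Q : seq (qatom ar l)).
Hypothesis hl : 0 < l.

Lemma iii_ii : ExistentialWins P (Some l) None Q true -> ExistentialWins P None None Q true.
Proof.
case=> str' W; exists (fun p => tsub (nth 0 p) (str' (map (index^~ p) p))) => w _.
pose w' i := index (w i) (mkseq w i.+1).
have w'le : forall i, w' i <= i.
  by move=> i; rewrite -ltnS -[X in _ < X](size_mkseq w) index_mem mem_mkseq_f.
have ww' : forall i, w (w' i) = w i.
  move=> i; rewrite -[RHS](nth_index 0 (mem_mkseq_f w (ltnSn i))) nth_mkseq //.
  exact: (w'le i).
have Emap : forall j, map (index^~ (mkseq w j.+1)) (mkseq w j.+1) = mkseq w' j.+1.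
  move=> j; rewrite /mkseq -map_comp; apply/eq_in_map => i; rewrite mem_iota add0n => /andP[_ ij].
  change (index (w i) (mkseq w j.+1) = w' i).
  by rewrite /w'; apply: index_mkseq_prefix => //; apply: mem_mkseq_f.
have Hw' : forall j, j < l -> inC (Some l) (w' j).
  move=> j jl; exact: leq_ltn_trans (w'le j) jl.
case: (W w' Hw') => H1 H2.
have Hc : forall j, j < l -> forall c, c \in consts (str' (mkseq w' j.+1)) ->
    exists2 i, i <= j & c = w' i.
  move=> j jl c Hc; case/andP: (H1 j jl) => _ /= /allP /(_ c Hc) /mem_mkseq_lt'[i].
  by rewrite ltnS; exists i.
have Hnth : forall j n, j < n -> forall c, c \in consts (str' (mkseq w' j.+1)) ->
    j < l -> nth 0 (mkseq w n) c = w c.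
  move=> j n jn c /Hc H jl; case: (H jl) => i ij ->; apply: nth_mkseq.
  exact: leq_ltn_trans (w'le i) (leq_ltn_trans ij jn).
split.
  move=> j jl; rewrite Emap; apply/andP; split.
    rewrite /Tdom andbT; apply: wf_tsub (_ : wf_term (Some l) k _) _ => //.
    by case/andP: (H1 j jl) => /andP[].
  rewrite /= consts_tsub; apply/allP => x /mapP[c Hcc ->].
  rewrite (Hnth j j.+1) //; case: (Hc j jl c Hcc) => i ij ->; rewrite ww'.
  exact: mem_mkseq_f.
apply: (transfer (H := tsub (nth 0 (mkseq w l))) H2) => //.
- by move=> t Ht; apply: wf_tsub Ht _.
- case=> j.
    change (Cst (w j) = Cst (nth 0 (mkseq w l) (w' j))).
    by rewrite nth_mkseq ?ww' // (leq_ltn_trans (w'le j)).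
  change (tsub (nth 0 (mkseq w j.+1)) (str' (map (index^~ (mkseq w j.+1)) (mkseq w j.+1)))
    = tsub (nth 0 (mkseq w l)) (str' (mkseq w' j.+1))).
  rewrite Emap; apply: tsub_eq => c Hcc.
  by rewrite (Hnth j j.+1) // (Hnth j l).
- case=> j; first by rewrite /Tdom.
  change (Tdom k None None (tsub (nth 0 (mkseq w j.+1)) (str' (map (index^~ (mkseq w j.+1)) (mkseq w j.+1))))).
  rewrite Emap /Tdom andbT; apply: wf_tsub (_ : wf_term (Some l) k _) _ => //.
  by case/andP: (H1 j (ltn_ord j)) => /andP[].
Qed.
End Rename.

Section Sim.
Variable str' : seq nat -> term.

Definition fresh (acc : seq nat) : nat :=
  (foldr maxn 0 (acc ++ flatten [seq consts (str' (take i.+1 acc)) | i <- iota 0 (size acc)])).+1.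

Lemma fresh_gt1 acc x : x \in acc -> x < fresh acc.
Proof. by move=> H; rewrite ltnS; apply: foldr_maxn_ge; rewrite mem_cat H. Qed.

Lemma fresh_gt2 acc i c : i < size acc -> c \in consts (str' (take i.+1 acc)) -> c < fresh acc.
Proof.
move=> H Hc; rewrite ltnS; apply: foldr_maxn_ge; rewrite mem_cat; apply/orP; right.
by apply/flatten_mapP; exists i => //; rewrite mem_iota.
Qed.

Fixpoint Wseq (w : nat -> nat) n : seq nat :=
  if n is n'.+1 then
    let acc := Wseq w n' in
    rcons acc (if w n' \in mkseq w n' then nth 0 acc (index (w n') (mkseq w n')) else fresh acc)
  else [::].

Lemma size_W w n : size (Wseq w n) = n.
Proof. by elim: n => //= n IH; rewrite size_rcons IH. Qed.

Lemma take_W w n m : n <= m -> take n (Wseq w m) = Wseq w n.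
Proof.
elim: m => [|m IH]; first by rewrite leqn0 => /eqP->.
rewrite leq_eqVlt => /orP[/eqP->|]; first by rewrite take_oversize // size_W.
rewrite ltnS => nm /=; rewrite -cats1 takel_cat ?size_W //; exact: IH.
Qed.

Lemma W_causal w1 w2 n : (forall i, i < n -> w1 i = w2 i) -> Wseq w1 n = Wseq w2 n.
Proof.
elim: n => //= n IH H.
have E : forall i, i < n -> w1 i = w2 i by move=> i ni; apply: H; exact: ltnW.
by rewrite IH // (mkseq_ext_in E) H.
Qed.

Variable w : nat -> nat.
Definition v i := nth 0 (Wseq w i.+1) i.

Lemma W_mkseq n : Wseq w n = mkseq v n.
Proof.
rewrite -[LHS](mkseq_nth 0) size_W.
apply: mkseq_ext_in => i ni; rewrite /v -(take_W w ni) nth_take //.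
Qed.

Lemma v_def j : v j = if w j \in mkseq w j then v (index (w j) (mkseq w j)) else fresh (mkseq v j).
Proof.
rewrite {1}/v /= nth_rcons size_W ltnn eqxx W_mkseq.
case: ifP => // H; rewrite nth_mkseq //.
by rewrite -[X in _ < X](size_mkseq w j) index_mem.
Qed.

Lemma rep t : exists a, [/\ a <= t, w a = w t, w a \notin mkseq w a & v t = v a].
Proof.
case H: (w t \in mkseq w t); last by exists t; rewrite H v_def H.
pose a := index (w t) (mkseq w t).
have at_ : a < t by rewrite -[X in _ < X](size_mkseq w t) index_mem.
have wa : w a = w t by rewrite -(nth_mkseq 0 w at_) nth_index.
exists a; split => //; first exact: ltnW.
  apply/negP; rewrite wa -(take_mkseq w (ltnW at_)) => /index_ltn; by rewrite ltnn.
by rewrite v_def H.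
Qed.

Lemma v_first a : w a \notin mkseq w a -> v a = fresh (mkseq v a).
Proof. by move/negbTE=> H; rewrite v_def H. Qed.

Lemma P1 i j : v i = v j -> w i = w j.
Proof.
case: (rep i) => a [_ wa fa va]; case: (rep j) => b [_ wb fb vb].
rewrite va vb => E; rewrite -wa -wb.
case: (ltngtP a b) => [ab|ba|->//].
  by have := fresh_gt1 (mem_mkseq_f v ab); rewrite -v_first // E ltnn.
by have := fresh_gt1 (mem_mkseq_f v ba); rewrite -v_first // E ltnn.
Qed.

Lemma P2 i n c : c \in consts (str' (mkseq v i.+1)) -> c \in mkseq v n -> c \in mkseq v i.+1.
Proof.
move=> Hc /mem_mkseq_lt'[t tn Ect].
case: (leqP t i) => ti; first by rewrite Ect; apply: mem_mkseq_f; rewrite ltnS.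
case: (rep t) => a [_ _ fa vta].
case: (leqP a i) => ai; first by rewrite Ect vta; apply: mem_mkseq_f; rewrite ltnS.
exfalso; rewrite -(take_mkseq v ai) in Hc.
have := fresh_gt2 (acc := mkseq v a) (i := i) _ Hc; rewrite size_mkseq => /(_ ai).
by rewrite -v_first // -vta -Ect ltnn.
Qed.
End Sim.

Section Fresh.
Variables (S : finType) (ar : S -> nat) (k : nat) (P : seq (patom ar k)) (l : nat) (Q : seq (qatom ar l)).
Hypothesis hl : 0 < l.

Lemma i_ii : ExistentialWins P None None Q false -> ExistentialWins P None None Q true.
Proof.
case=> str' W.
pose str := (fun p => let V := Wseq str' (nth 0 p) (size p) in
  tsub (fun c => if c \in V then nth 0 p (index c V) else head 0 p) (str' V)).
exists str => w _.
pose vv := v str' w.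
pose gj j c := if c \in mkseq vv j.+1 then w (index c (mkseq vv j.+1)) else w 0.
have Ez : forall j, str (mkseq w j.+1) = tsub (gj j) (str' (mkseq vv j.+1)).
  move=> j; rewrite /str; cbv beta zeta; rewrite size_mkseq.
  have -> : Wseq str' (nth 0 (mkseq w j.+1)) j.+1 = mkseq vv j.+1.
    by rewrite -W_mkseq; apply: W_causal => i ij; rewrite nth_mkseq.
  apply: tsub_eq => c _; rewrite /gj; case: ifP => // H.
  by rewrite nth_mkseq // -[X in _ < X](size_mkseq vv j.+1) index_mem.
case: (W vv (fun _ _ => isT)) => H1 H2.
pose G c := if c \in mkseq vv l then w (index c (mkseq vv l)) else w 0.
have gG : forall j, j < l -> forall c, c \in consts (str' (mkseq vv j.+1)) -> gj j c = G c.
  move=> j jl c Hc; rewrite /gj /G; case: ifP => H.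
    have Hl : c \in mkseq vv l by apply: (@mem_take j.+1); rewrite take_mkseq.
    by rewrite Hl (index_mkseq_prefix jl H).
  case: ifP => // H'; exfalso; move/negbT: H => /negP; apply; exact: P2 Hc H'.
split.
  move=> j jl; rewrite Ez; apply/andP; split.
    rewrite /Tdom andbT; apply: wf_tsub (_ : wf_term None k _) _ => //.
    by case/andP: (H1 j jl) => /andP[].
  rewrite /= consts_tsub; apply/allP => x /mapP[c Hcc ->]; rewrite /gj.
  case: ifP => H; last exact: mem_mkseq_f.
  by apply: mem_mkseq_f; rewrite -[X in _ < X](size_mkseq vv j.+1) index_mem.
apply: (transfer (H := tsub G) H2) => //.
- by move=> t Ht; apply: wf_tsub Ht _.
- case=> j.
    change (Cst (w j) = Cst (G (vv j))); rewrite /G mem_mkseq_f //; congr Cst; apply: (@P1 str' w).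
    have il : index (vv j) (mkseq vv l) < l.
      by rewrite -[X in _ < X](size_mkseq vv l) index_mem mem_mkseq_f.
    change (vv j = vv (index (vv j) (mkseq vv l))); apply/esym.
    by rewrite -(nth_mkseq 0 vv il) nth_index // mem_mkseq_f.
  change (tsub (gj j) (str' (mkseq vv j.+1)) = tsub G (str' (mkseq vv j.+1)))
    || (rewrite Ez); apply: tsub_eq; exact: gG.
- case=> j; first by rewrite /Tdom.
  rewrite Ez /Tdom andbT; apply: wf_tsub (_ : wf_term None k _) _ => //.
  by case/andP: (H1 j (ltn_ord j)) => /andP[].
Qed.
End Fresh.

Theorem mainTheorem14 (S : finType) (ar : S -> nat) (k : nat)
    (P : seq (patom ar k)) (l : nat) (Q : seq (qatom ar l)) (hl : 0 < l) :
  [/\ (ExistentialWins P None None Q false <-> ExistentialWins P None None Q true),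
      (ExistentialWins P None None Q true <-> ExistentialWins P (Some l) None Q true)
    & (ExistentialWins P (Some l) None Q true <->
       ExistentialWins P (Some l) (Some (l ^ (l + 2))) Q true)].
Proof.
split; split.
- exact: i_ii.
- exact: ii_i.
- exact: ii_iii.
- exact: iii_ii.
- exact: iii_iv.
- exact: iv_iii.
Qed.
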